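(* Let $H$ be a $k$-gate. If $H$ is an induced subgraph of a graph $G$, then $H$ is an induced subgraph of some atom of $G$.
   Context: All graphs are finite and simple. A clique is a maximal complete set of vertices. A clique $C$ of a connected graph $H$ is a separator if $H-C$ (the subgraph induced by $V(H)\setminus C$) is disconnected; an atom is a connected graph with no clique separator. The atoms of a graph $G$ are the graphs obtained by the decomposition of $G$ by clique separators: $G$ is progressively decomposed along clique separators into a clique decomposition tree whose leaves correspond to atoms; equivalently, the atoms of $G$ are the maximal connected induced subgraphs of $G$ having no clique separator. Gates are defined recursively: (i) every chordless cycle $C_n$ with $n\geq 4$ is a gate; (ii) if $H'$ is a gate, $C$ and $C'$ are disjoint cliques of $H'$, and $P=(v_1,\dots,v_l)$ with $l\geq 2$ is a chordless path vertex-disjoint from $H'$, then the union of $H'$ and $P$ together with all edges between $v_1$ and the vertices of $C$ and all edges between $v_l$ and the vertices of $C'$ is a gate; (iii) there are no other gates. A $k$-gate is a gate with exactly $k$ cliques. *)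

(* Defs.v *)
(* A graph is a symmetric irreflexive relation e on a finType T;
   subgraphs are represented by vertex sets S : {set T} (induced subgraph G[S]). *)
From mathcomp Require Import all_boot.
Set Implicit Arguments. Unset Strict Implicit. Unset Printing Implicit Defensive.

Section Graphs.
Variables (T : finType) (e : rel T).

Definition simple_graph := irreflexive e /\ symmetric e.

Definition induced_rel (S : {set T}) : rel T :=
  [rel x y | [&& x \in S, y \in S & e x y]].

Definition connected_set (S : {set T}) : Prop :=
  forall x y, x \in S -> y \in S -> connect (induced_rel S) x y.

Definition complete_set (A : {set T}) : bool :=
  [forall x in A, forall y in A, (x != y) ==> e x y].

Definition clique_in (S C : {set T}) : bool :=
  [&& C \subset S, complete_set C &
      [forall x in S :\: C, exists y in C, ~~ e x y]].

Definition clique_separator (S C : {set T}) : Prop :=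
  clique_in S C /\ ~ connected_set (S :\: C).

Definition is_atom (A : {set T}) : Prop :=
  [/\ A != set0, connected_set A, (forall C, ~ clique_separator A C) &
      forall B : {set T}, A \subset B -> B != set0 -> connected_set B ->
        (forall C, ~ clique_separator B C) -> B = A].

Definition chordless_cycle (S : {set T}) : Prop :=
  exists s : seq T, [/\ uniq s, S = [set x in s], 4 <= size s &
    {in S &, forall x y, e x y =
       (index y s == (index x s).+1 %% size s) ||
       (index x s == (index y s).+1 %% size s)}].

Definition chordless_path (s : seq T) : Prop :=
  [/\ uniq s, 2 <= size s &
    {in s &, forall x y, e x y =
       (index y s == (index x s).+1) || (index x s == (index y s).+1)}].

Inductive gate : {set T} -> Prop :=
| gate_cycle S : chordless_cycle S -> gate S
| gate_ext S C C' (s : seq T) :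
    gate S -> clique_in S C -> clique_in S C' -> [disjoint C & C'] ->
    chordless_path s -> [disjoint [set x in s] & S] ->
    (forall p x, p \in s -> x \in S ->
       e p x = ((p == head p s) && (x \in C)) || ((p == last p s) && (x \in C'))) ->
    gate (S :|: [set x in s]).

Definition num_cliques (S : {set T}) : nat :=
  #|[set C : {set T} | clique_in S C]|.

End Graphs.

(* Main.v *)
Require Import Defs.
From mathcomp Require Import all_boot zify.
From Stdlib Require Import Classical.
Set Implicit Arguments. Unset Strict Implicit. Unset Printing Implicit Defensive.

Section G.
Variables (T : finType) (e : rel T).
Hypothesis esym : symmetric e.
Hypothesis eirr : irreflexive e.

Lemma induced_symm A : symmetric (induced_rel e A).
Proof. move=> x y; rewrite /induced_rel /= esym; by case: (x \in A); case: (y \in A). Qed.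

Lemma conn_sym A x y : connect (induced_rel e A) x y = connect (induced_rel e A) y x.
Proof. exact: (sym_connect_sym (induced_symm A)). Qed.

Lemma conn_mono (A B : {set T}) x y : A \subset B -> connect (induced_rel e A) x y ->
  connect (induced_rel e B) x y.
Proof.
move=> sAB; apply: connect_sub => u v /= /and3P[uA vA euv].
by apply: connect1; rewrite /induced_rel /= (subsetP sAB _ uA) (subsetP sAB _ vA).
Qed.

Lemma conn_chain (R : {set T}) (f : nat -> T) a b : a <= b ->
  (forall m, a <= m < b -> e (f m) (f m.+1)) ->
  (forall m, a <= m <= b -> f m \in R) ->
  connect (induced_rel e R) (f a) (f b).
Proof.
elim: b => [|b IH] Hab He Hin.
  by have -> : a = 0 by lia.
case: (ltnP b a) => Hba.
  by have -> : a = b.+1 by lia.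
apply: connect_trans (IH Hba _ _) _.
- by move=> m Hm; apply: He; lia.
- by move=> m Hm; apply: Hin; lia.
apply: connect1; rewrite /induced_rel /= He ?Hin //; lia.
Qed.

Lemma conn_via (X Y : {set T}) : Y \subset X -> connected_set e Y ->
  (forall x, x \in X -> exists2 y, y \in Y & connect (induced_rel e X) x y) ->
  connected_set e X.
Proof.
move=> sYX cY H x y xX yX.
have [x' x'Y cx] := H x xX; have [y' y'Y cy] := H y yX.
apply: connect_trans cx _; apply: connect_trans _ _.
  exact: (conn_mono sYX (cY _ _ x'Y y'Y)).
by rewrite conn_sym.
Qed.

Definition Inv (S : {set T}) :=
  forall K, complete_set e K -> connected_set e (S :\: K).

Definition Q (S : {set T}) :=
  [/\ S != set0, connected_set e S & forall C, ~ clique_separator e S C].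

Lemma Inv_Q S : S != set0 -> Inv S -> Q S.
Proof.
move=> nS I; split => //.
  have := I set0; rewrite setD0; apply.
  by apply/forallP => x; apply/implyP; rewrite inE.
move=> C [/and3P[_ cC _] nc]; exact: nc (I C cC).
Qed.

Lemma Q_atom S : Q S -> exists A, is_atom e A /\ S \subset A.
Proof.
move=> QS.
suff H : forall n (B : {set T}), #|T| - #|B| <= n -> Q B -> S \subset B ->
  exists A, is_atom e A /\ S \subset A by exact: (H _ S (leqnn _) QS (subxx _)).
elim=> [|n IH] B Hn [nB cB sB] sSB.
  exists B; split => //; split => // B' sBB' nB' cB' sB'.
  apply/eqP; rewrite eq_sym eqEcard sBB' /=.
  have := max_card B'; lia.
case: (classic (forall B' : {set T}, B \subset B' -> B' != set0 -> connected_set e B' ->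
        (forall C, ~ clique_separator e B' C) -> B' = B)) => Hm.
  by exists B; split => //; split.
have [B' HB'] := not_all_ex_not _ _ Hm.
case: (classic (B \subset B')) => sBB'; last by exfalso; apply: HB' => H; case: sBB'.
case: (classic (B' != set0)) => nB'; last by exfalso; apply: HB' => _ H; case: nB'.
case: (classic (connected_set e B')) => cB'; last by exfalso; apply: HB' => _ _ H; case: cB'.
case: (classic (forall C, ~ clique_separator e B' C)) => sB';
  last by exfalso; apply: HB' => _ _ _ H; case: sB'.
have neq : B' != B by apply/eqP => E; apply: HB' => *.
have pr : B \proper B' by rewrite properEneq eq_sym neq.
have := proper_card pr; have := max_card B' => h1 h2.
apply: (IH B') => //; first lia.
exact: subset_trans sSB sBB'.
Qed.
End G.

Section G.
Variables (T : finType) (e : rel T).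
Hypothesis esym : symmetric e.
Hypothesis eirr : irreflexive e.

Lemma cycle_inv S : chordless_cycle e S -> Inv e S.
Proof.
case=> s [Hu HS Hn Hadj] K HK.
have x0 : T by move: Hn; case: (s) => [H|x ? _]; [discriminate H | exact x].
set n := size s in Hn Hadj.
have n0 : 0 < n by lia.
have Hn0 := Hn.
pose v m := nth x0 s (m %% n).
have vin m : v m \in S by rewrite HS inE mem_nth // ltn_pmod.
have vidx m : index (v m) s = m %% n by rewrite index_uniq // ltn_pmod.
have vmod p q : p %% n = q %% n -> v p = v q by rewrite /v => ->.
have vS x : x \in S -> x = v (index x s).
  move=> xS; have xs : x \in s by move: xS; rewrite HS inE.
  by rewrite /v modn_small ?index_mem // nth_index.
have vadj p r : r < n -> e (v p) (v (p + r)) = (r == 1) || (r == n.-1).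
  move=> rn; rewrite Hadj ?vin // !vidx.
  have -> : (p %% n).+1 %% n = (p + 1) %% n by rewrite -addn1 modnDml.
  have -> : ((p + r) %% n).+1 %% n = (p + r.+1) %% n by rewrite -addn1 modnDml -addnA addn1.
  rewrite eqn_modDl -{1}(addn0 p) eqn_modDl (modn_small rn) (@modn_small 1 n); last lia.
  rewrite mod0n; case: (ltngtP r.+1 n) => h.
  - rewrite (modn_small h); have -> : (r == n.-1) = false by apply/eqP; lia.
    by case: (r == 1).
  - lia.
  - by rewrite h modnn; have -> : (r == n.-1) = true by apply/eqP; lia.
have vrel x j : x \in S -> j < n -> exists2 r, r < n & x = v (j + r).
  move=> xS jn; exists ((index x s + (n - j)) %% n); first by rewrite ltn_pmod.
  rewrite {1}(vS x xS); apply: vmod.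
  rewrite modnDmr.
  have -> : j + (index x s + (n - j)) = index x s + n by lia.
  by rewrite modnDr.
have compl x y : x \in K -> y \in K -> x != y -> e x y.
  by move=> xK yK nxy; move/forallP: HK => /(_ x) /implyP /(_ xK) /forallP /(_ y) /implyP /(_ yK) /implyP; apply.
case: (pickP (fun x => (x \in K) && (x \in S))) => [a /andP[aK aS]|noK].
- pose ia := index a s.
  have ian : ia < n by rewrite index_mem -(in_set (fun x => x \in s)) -HS.
  have va : v ia = a by rewrite -vS.
  pose pa := v (ia + n.-1).
  pose a' := if pa \in K then pa else a.
  have a'K : a' \in K by rewrite /a'; case: ifP.
  pose j := index a' s.
  have a'S : a' \in S by rewrite /a'; case: ifP => _ //; exact: vin.
  have jn : j < n by rewrite index_mem -(in_set (fun x => x \in s)) -HS.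
  have vj : v j = a' by rewrite -vS.
  have predK : v (j + n.-1) \notin K.
    rewrite /j /a'; case: ifP => paK; last by rewrite -/ia -/pa paK.
    apply/negP => inK.
    have E : v (index pa s + n.-1) = v (ia + (n - 2)).
      apply: vmod; rewrite vidx modnDml.
      have -> : ia + n.-1 + n.-1 = ia + (n - 2) + n by lia.
      by rewrite modnDr.
    rewrite E in inK.
    case: (eqVneq a (v (ia + (n - 2)))) => h.
      have := vidx (ia + (n-2)); rewrite -h -/ia -{1}(modn_small ian).
      rewrite -{1}(addn0 ia) => /eqP; rewrite eqn_modDl mod0n modn_small; lia.
    have := compl _ _ aK inK h; rewrite -va vadj; last lia.
    by case: eqP; [lia|]; case: eqP; [lia|].
  pose d := if v (j + 1) \in K then 2 else 1.
  have d12 : 1 <= d <= 2 by rewrite /d; case: ifP.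
  have arcK m : d <= m < n -> v (j + m) \notin K.
    move=> hm; apply/negP => inK.
    case: (eqVneq a' (v (j + m))) => h.
      have := vidx (j + m); rewrite -h -/j -{1}(modn_small jn).
      rewrite -{1}(addn0 j) => /eqP; rewrite eqn_modDl mod0n modn_small; lia.
    have := compl _ _ a'K inK h; rewrite -vj vadj; last lia.
    case: eqP => [m1|_]; first by move: inK hm; rewrite /d m1; case: ifP => // ->; lia.
    case: eqP => [m1|_] //; by move: inK; rewrite m1 (negbTE predK).
  apply: (@conn_via _ _ esym _ [set v (j + d)]).
  - by rewrite sub1set inE vin arcK //; lia.
  - by move=> x y; rewrite !inE => /eqP -> /eqP ->.
  move=> x; rewrite inE => /andP[xK xS].
  have [r rn xr] := vrel x j xS jn.
  have dr : d <= r.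
    case: (ltnP r d) => // rd; exfalso.
    case: (eqVneq r 0) => [r0|r0].
      by move: xK; rewrite xr r0 addn0 vj a'K.
    have r1 : r = 1 by lia.
    move: rd; rewrite /d; case: ifP => inK rd; last lia. by rewrite xr r1 inK in xK.
  exists (v (j + d)); first by rewrite inE.
  rewrite conn_sym // xr.
  apply: (@conn_chain _ _ _ (fun m => v (j + m))) => //.
    by move=> m hm; rewrite addnS -addn1 vadj //; lia.
  by move=> m hm; rewrite inE vin arcK ?andbT //; lia.
- apply: (@conn_via _ _ esym _ [set v 0]).
  - by rewrite sub1set inE vin andbT; have := noK (v 0); rewrite vin andbT => ->.
  - by move=> x y; rewrite !inE => /eqP -> /eqP ->.
  move=> x; rewrite inE => /andP[xK xS].
  have [r rn xr] := vrel x 0 xS n0.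
  exists (v 0); first by rewrite inE.
  rewrite conn_sym // xr.
  apply: (@conn_chain _ _ _ (fun m => v (0 + m))) => //.
    by move=> m hm; rewrite addnS -addn1 vadj //; lia.
  move=> m hm; rewrite inE vin andbT; have := noK (v (0 + m)); rewrite vin andbT => ->; done.
Qed.
End G.

Section G.
Variables (T : finType) (e : rel T).
Hypothesis esym : symmetric e.
Hypothesis eirr : irreflexive e.

Lemma clique_nonempty S C : S != set0 -> clique_in e S C -> exists c, c \in C.
Proof.
move=> /set0Pn[x xS] /and3P[sCS _ /forallP mx].
case: (eqVneq C set0) => [C0|/set0Pn//].
have := mx x; rewrite C0 !inE xS /= => /existsP[y]; by rewrite inE.
Qed.

Lemma ext_inv S C C' s :
    S != set0 -> Inv e S -> clique_in e S C -> clique_in e S C' -> [disjoint C & C'] ->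
    chordless_path e s -> [disjoint [set x in s] & S] ->
    (forall p x, p \in s -> x \in S ->
       e p x = ((p == head p s) && (x \in C)) || ((p == last p s) && (x \in C'))) ->
    Inv e (S :|: [set x in s]).
Proof.
move=> nS IS HC HC' dCC' [Hu Hs Hadj] dPS Hat K HK.
have compl x y : x \in K -> y \in K -> x != y -> e x y.
  by move=> xK yK nxy; move/forallP: HK => /(_ x) /implyP /(_ xK) /forallP /(_ y) /implyP /(_ yK) /implyP; apply.
have [c0 c0C] := clique_nonempty nS HC.
have [c1 c1C'] := clique_nonempty nS HC'.
move: HC HC' => /and3P[/subsetP sCS _ mxC] /and3P[/subsetP sC'S _ _].
have mxCP x : x \in S -> x \notin C -> exists2 y, y \in C & ~~ e x y.
  move=> xS xC; have := forallP mxC x; rewrite inE xS xC /= => /existsP[y /andP[]].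
  by exists y.
clear mxC.
have dC x : x \in C -> x \in C' = false by move=> h; apply: (disjointFr dCC').
have dC' x : x \in C' -> x \in C = false by move=> h; apply: (disjointFl dCC').
clear dCC'.
have ISK := IS K HK.
clear IS.
case: s Hu Hs Hadj dPS Hat => [//|a s'] Hu Hs Hadj dPS Hat.
set s := a :: s' in Hu Hs Hadj dPS Hat *.
set l := last a s'.
pose f m := nth a s m.
have fin m : m < size s -> f m \in s by move=> h; rewrite mem_nth.
have fidx m : m < size s -> index (f m) s = m by move=> h; rewrite index_uniq.
have fS m : m < size s -> f m \in S = false.
  by move=> h; apply: (disjointFr dPS); rewrite inE fin.
have PS x : x \in [set x in s] -> x \in S -> False.
  by move=> h1 h2; move: (disjointFr dPS h1); rewrite h2.
clear dPS.
have fl : f (size s).-1 = l by rewrite /f nth_last.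
have fadj m : m.+1 < size s -> e (f m) (f m.+1).
  move=> h; have h' := ltnW h.
  by rewrite Hadj ?(fin _ h) ?(fin _ h') // (fidx _ h) (fidx _ h') eqxx.
have at' p x : p \in s -> x \in S -> e p x = ((p == a) && (x \in C)) || ((p == l) && (x \in C')).
  by move=> ps xS; rewrite Hat.
clear Hat.
have nsz : 1 < size s by [].
set X := (S :|: [set x in s]) :\: K.
have sYX : S :\: K \subset X.
  by apply/subsetP => x; rewrite !inE => /andP[-> ->].
apply: (conn_via esym sYX ISK).
move=> x; rewrite !inE => /andP[xK xS'].
case/orP: xS' => [xS|xs].
  by exists x; rewrite ?inE ?xK.
pose i := index x s.
have iS : i < size s by rewrite index_mem.
have fi : f i = x by rewrite /f nth_index.
have routeC c : c \in C -> c \notin K -> (forall m, m < i -> f m \notin K) ->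
    exists2 y, y \in S :\: K & connect (induced_rel e X) x y.
  move=> cC cK pre; have cS := sCS c cC.
  exists c; first by rewrite inE cK cS.
  rewrite -fi conn_sym //; apply: (connect_trans (y := f 0)).
    have aK : a \notin K.
      case: (ltnP 0 i) => h; first exact: pre 0 h.
      have i0 : i = 0 by clear -h; lia.
      have <- : x = a by rewrite -fi i0.
      exact: xK.
    have eca : e c a by rewrite esym (at' _ _ (mem_head a s') cS) eqxx cC.
    apply: connect1; rewrite /induced_rel /= !in_setD !in_setU !in_set cS cK aK mem_head eca orbT.
    done.
  apply: (conn_chain (f := f)) => //.
    by move=> m hm; apply: fadj; clear -hm iS; lia.
  move=> m hm; have hm' : m < size s by clear -hm iS; lia.
  rewrite in_setD in_setU in_set (fin _ hm') orbT andbT.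
  case: (ltnP m i) => h; first by rewrite pre.
  have -> : m = i by clear -h hm; lia.
  by rewrite fi.
have routeC' c : c \in C' -> c \notin K -> (forall m, i < m < size s -> f m \notin K) ->
    exists2 y, y \in S :\: K & connect (induced_rel e X) x y.
  move=> cC cK suf; have cS := sC'S c cC.
  exists c; first by rewrite inE cK cS.
  have lt : (size s).-1 < size s by clear; rewrite /s /=.
  rewrite -fi; apply: (connect_trans (y := f (size s).-1)).
    apply: (conn_chain (f := f)); first by clear -iS; lia.
      by move=> m hm; apply: fadj; clear -hm iS; lia.
    move=> m hm; have hm' : m < size s by clear -hm iS; lia.
    rewrite in_setD in_setU in_set (fin _ hm') orbT andbT.
    case: (ltnP i m) => h; first by rewrite suf // h hm'.
    have -> : m = i by clear -h hm; lia.
    by rewrite fi.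
  have lK : f (size s).-1 \notin K.
    case: (ltnP i (size s).-1) => h; first by rewrite suf // h lt.
    have -> : (size s).-1 = i by clear -h iS; lia.
    by rewrite fi.
  apply: connect1; rewrite /induced_rel /= !in_setD !in_setU !in_set cS cK lK (fin _ lt) orbT /=.
  by rewrite (at' _ _ (fin _ lt) cS) fl eqxx cC orbT.
case: (classic (exists m, m < i /\ f m \in K)) => [[m1 [hm1 m1K]]|npre].
  have m1s : m1 < size s by clear -hm1 iS; lia.
  case: (classic (exists m, i < m < size s /\ f m \in K)) => [[m2 [hm2 m2K]]|nsuf].
    exfalso.
    have m2s : m2 < size s by clear -hm2; lia.
    have ne : f m1 != f m2.
      apply/eqP => E; have := fidx m1 m1s; rewrite E fidx // => E2.
      by clear -E2 hm1 hm2; lia.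
    have := compl _ _ m1K m2K ne; rewrite Hadj ?(fin _ m1s) ?(fin _ m2s) //.
    rewrite (fidx _ m1s) (fidx _ m2s).
    by case/orP => /eqP E; clear -E hm1 hm2; lia.
  apply: (routeC' c1) => //.
    apply/negP => c1K.
    have ne : f m1 != c1.
      by apply/eqP => E; have := fS m1 m1s; rewrite E (sC'S _ c1C').
    have nel : f m1 != l.
      apply/eqP => E; have := fidx m1 m1s; rewrite E -fl fidx; last by clear; rewrite /s /=.
      by move=> E2; clear -E2 hm1 iS; lia.
    have := compl _ _ m1K c1K ne.
    by rewrite (at' _ _ (fin _ m1s) (sC'S _ c1C')) (dC' _ c1C') andbF /= (negbTE nel).
  by move=> m hm; apply/negP => mK; apply: nsuf; exists m.
case: (classic (exists c, c \in C /\ c \notin K)) => [[c [cC cK]]|nC].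
  by apply: (routeC c) => // m hm; apply/negP => mK; apply: npre; exists m.
have CK c : c \in C -> c \in K.
  by move=> cC; apply/negPn/negP => cK; apply: nC; exists c.
apply: (routeC' c1) => //.
  apply/negP => c1K.
  have c1S := sC'S _ c1C'.
  have [y yC ney] := mxCP c1 c1S (negbT (dC' _ c1C')).
  have ne : c1 != y by apply/eqP => E; move: yC; rewrite -E dC'.
  by move: ney; rewrite (compl _ _ c1K (CK _ yC) ne).
move=> m /andP[hm hm2]; apply/negP => mK.
have c0S := sCS _ c0C.
have ne : f m != c0 by apply/eqP => E; have := fS m hm2; rewrite E c0S.
have nea : f m != a.
  apply/eqP => E; have := fidx m hm2; rewrite E /= eqxx => E2.
  by clear -E2 hm; lia.
have := compl _ _ mK (CK _ c0C) ne.
by rewrite (at' _ _ (fin _ hm2) c0S) (dC _ c0C) andbF orbF (negbTE nea).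
Qed.
End G.

Lemma gate_inv (T : finType) (e : rel T) S : symmetric e -> irreflexive e ->
  gate e S -> S != set0 /\ Inv e S.
Proof.
move=> esym eirr; elim=> [S0 Hc | S0 C C' s _ [nS IS] HC HC' dCC' Hp dPS Hat].
  split. 2: exact: (@cycle_inv T e esym S0 Hc).
  case: Hc => s [_ HS Hn _]; apply/set0Pn.
  by move: Hn HS; case: s => // x s' _ ->; exists x; rewrite inE mem_head.
split; last exact: (@ext_inv T e esym S0 C C' s nS IS HC HC' dCC' Hp dPS Hat).
case/set0Pn: nS => x xS; apply/set0Pn; exists x; by rewrite inE xS.
Qed.

Theorem lemma12 (T : finType) (e : rel T) (k : nat) (S : {set T}) :
  simple_graph e -> gate e S -> num_cliques e S = k ->
  exists A : {set T}, is_atom e A /\ S \subset A.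
Proof.
move=> [eirr esym] g _.
have [nS IS] := gate_inv esym eirr g.
exact: Q_atom (Inv_Q nS IS).
Qed.
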